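(* Let $\lambda\ge0$ and $1\le n\le\lambda+1$ be integers, and let $I_n$ be the set of sequences $(k_0,\ldots,k_a)$ of non-negative integers with $\sum_{j=0}^ak_j=n$ and $\sum_{j=0}^ajk_j=n$. Then $$w_{n,\lambda}(Y)=\sum_{(k_0,\ldots,k_a)\in I_n}q_{(k_0,\ldots,k_a)}\prod_{j=0}^a\big(U^{(j)}(Y)\big)^{k_j}$$ for some $q_{(k_0,\ldots,k_a)}\in\mathbb{Q}_+$.
   Context: Let $a\ge2$ be an integer, $R$ a $\mathbb{Q}$-algebra, $u_0,\ldots,u_a\in R$, and $U(Y)=\sum_{j=0}^au_jY^j\in R[Y]$, with $U^{(j)}$ its $j$-th derivative in $Y$. $\mathbb{Q}_+$ denotes the positive rationals. For each integer $\lambda\ge0$ define polynomials $w_{n,\lambda}(Y)\in R[Y]$ recursively by $w_{0,\lambda}(Y)=1/(\lambda+1)$ and $w_{n,\lambda}(Y)=(\lambda-n+2)U'(Y)w_{n-1,\lambda}(Y)+U(Y)w_{n-1,\lambda}'(Y)$ for $n\ge1$. *)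

(* Defs.v *)
From HB Require Import structures.
From mathcomp Require Import all_boot all_order all_algebra.
Set Implicit Arguments. Unset Strict Implicit. Unset Printing Implicit Defensive.
Import Order.TTheory GRing.Theory Num.Theory.
Local Open Scope ring_scope.

Definition Upoly (R : comAlgType rat) (a : nat) (u : 'I_a.+1 -> R) : {poly R} :=
  \sum_(j < a.+1) u j *: 'X^j.

Fixpoint wpoly (R : comAlgType rat) (U : {poly R}) (lam n : nat) : {poly R} :=
  match n with
  | 0 => ((lam.+1%:R : rat)^-1)%:A%:P
  | m.+1 => ((lam%:Z - m.+1%:Z + 2)%:~R : R)%:P * U^`() * wpoly U lam m
            + U * (wpoly U lam m)^`()
  end.

(* membership in I_n, for sequences (k_0..k_a) whose entries are bounded by n
   (automatic, since they are nonnegative and sum to n) *)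
Definition inI (a n : nat) (k : {ffun 'I_a.+1 -> 'I_n.+1}) : bool :=
  ((\sum_(j < a.+1) (k j : nat))%N == n) &&
  ((\sum_(j < a.+1) (j * k j))%N == n).

(* Main.v *)
Require Import Defs.
From HB Require Import structures.
From mathcomp Require Import all_boot all_order all_algebra.
From mathcomp Require Import zify ring lra.
Set Implicit Arguments. Unset Strict Implicit. Unset Printing Implicit Defensive.
Import Order.TTheory GRing.Theory Num.Theory.

Definition tof (a n : nat) (f : 'I_a.+1 -> nat) : {ffun 'I_a.+1 -> 'I_n.+1} :=
  [ffun i => inord (f i)].

Lemma tofE a n f i : (f i <= n)%N -> (@tof a n f i : nat) = f i.
Proof. by move=> h; rewrite ffunE inordK. Qed.

Definition incr a n (i : 'I_a.+1) (k : {ffun 'I_a.+1 -> 'I_n.+1}) :=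
  @tof a n (fun l => (k l + (l == i))%N).
Definition decr a n (i : 'I_a.+1) (k : {ffun 'I_a.+1 -> 'I_n.+1}) :=
  @tof a n (fun l => (k l - (l == i))%N).

Lemma incrE a n i (k : {ffun 'I_a.+1 -> 'I_n.+1}) l : (k i < n)%N -> (@incr a n i k l : nat) = (k l + (l == i))%N.
Proof.
move=> h; rewrite tofE //; case: eqP => [->|_]; first by rewrite addn1.
by rewrite addn0 -ltnS ltn_ord.
Qed.

Lemma decrE a n i (k : {ffun 'I_a.+1 -> 'I_n.+1}) l : (@decr a n i k l : nat) = (k l - (l == i))%N.
Proof. by rewrite tofE // (leq_trans (leq_subr _ _)) // -ltnS ltn_ord. Qed.

Lemma sum_ind a (g : 'I_a.+1 -> nat) i : (\sum_l g l * (l == i))%N = g i.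
Proof.
rewrite (bigD1 i) //= eqxx muln1 big1 ?addn0 // => l /negbTE ->; by rewrite muln0.
Qed.

Lemma sum_incr a n g (k : {ffun 'I_a.+1 -> 'I_n.+1}) i : (k i < n)%N ->
  (\sum_l g l * @incr a n i k l = \sum_l g l * k l + g i)%N.
Proof.
move=> h; rewrite -(sum_ind g i) -big_split /=; apply: eq_bigr => l _.
by rewrite incrE // mulnDr.
Qed.

Lemma sum_decr a n g (k : {ffun 'I_a.+1 -> 'I_n.+1}) i : (0 < k i)%N ->
  (\sum_l g l * @decr a n i k l + g i = \sum_l g l * k l)%N.
Proof.
move=> h; rewrite -(sum_ind g i) -big_split /=; apply: eq_bigr => l _.
rewrite decrE -mulnDr subnK //; case: eqP => [->|] //=.
Qed.

Lemma entry_le a (f : 'I_a.+1 -> nat) i : (f i <= \sum_l f l)%N.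
Proof. by rewrite (bigD1 i) //= leq_addr. Qed.

Lemma entry2_le a (f : 'I_a.+1 -> nat) i j : i != j -> (f i + f j <= \sum_l f l)%N.
Proof.
move=> ij; rewrite (bigD1 i) //= (bigD1 j) /= 1?eq_sym //= addnA leq_addr //.
Qed.

Definition J a n m (k : {ffun 'I_a.+1 -> 'I_n.+1}) : bool :=
  ((\sum_(j < a.+1) (k j : nat))%N == m) &&
  ((\sum_(j < a.+1) (j * k j))%N == m).

Lemma sum1 a n (k : {ffun 'I_a.+1 -> 'I_n.+1}) :
  (\sum_(j < a.+1) (k j : nat) = \sum_(j < a.+1) 1 * k j)%N.
Proof. by apply: eq_bigr => j _; rewrite mul1n. Qed.
Local Open Scope ring_scope.
Lemma deriv_prod_ord (R : comNzRingType) N (F : 'I_N -> {poly R}) :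
  (\prod_(i < N) F i)^`() =
  \sum_(i < N) \prod_(l < N) (if l == i then (F l)^`() else F l).
Proof.
elim: N F => [|N IH] F; first by rewrite !big_ord0 derivC.
rewrite big_ord_recr /= derivM IH big_ord_recr /= mulr_suml; congr (_ + _).
  apply: eq_bigr => i _; rewrite big_ord_recr /=.
  have -> : (ord_max == widen_ord (leqnSn N) i) = false.
    by apply/negbTE; rewrite neq_ltn /= ltn_ord orbT.
  by [].
rewrite big_ord_recr /= eqxx; congr (_ * _); apply: eq_bigr => l _.
have -> // : (widen_ord (leqnSn N) l == ord_max) = false.
by apply/negbTE; rewrite neq_ltn /= ltn_ord.
Qed.

Definition Mon (R : comNzRingType) a n (U : {poly R}) (k : {ffun 'I_a.+1 -> 'I_n.+1}) :=
  \prod_(j < a.+1) U^`(j) ^+ k j.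

Lemma Mon_incr R a n U (k : {ffun 'I_a.+1 -> 'I_n.+1}) i : (k i < n)%N ->
  Mon U (incr i k) = U^`(i) * @Mon R a n U k.
Proof.
move=> h; rewrite /Mon (bigD1 i) //= [in RHS](bigD1 i) //= mulrA -exprS incrE // eqxx addn1.
congr (_ * _); apply: eq_bigr => l /negbTE hl; by rewrite incrE // hl addn0.
Qed.

Lemma Mon_decr R a n U (k : {ffun 'I_a.+1 -> 'I_n.+1}) i : (0 < k i)%N ->
  @Mon R a n U k = U^`(i) * Mon U (decr i k).
Proof.
move=> h; rewrite /Mon (bigD1 i) //= [in RHS](bigD1 i) //= mulrA -exprS decrE eqxx subn1 prednK //.
congr (_ * _); apply: eq_bigr => l /negbTE hl; by rewrite decrE hl subn0.
Qed.

Lemma Mon_deriv R a n U (k : {ffun 'I_a.+1 -> 'I_n.+1}) :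
  (@Mon R a n U k)^`() = \sum_(j < a.+1) U^`(j.+1) * Mon U (decr j k) *+ k j.
Proof.
rewrite /Mon deriv_prod_ord; apply: eq_bigr => j _.
rewrite (bigD1 j) //= eqxx [in RHS](bigD1 j) //= deriv_exp -derivnS decrE eqxx subn1.
rewrite -mulrnAl -mulrnAl mulrA; congr (_ * _).
apply: eq_bigr => l /negbTE hl; by rewrite hl decrE hl subn0.
Qed.
Local Close Scope ring_scope.
Definition S1 a n (k : {ffun 'I_a.+1 -> 'I_n.+1}) := (\sum_l 1 * (k l : nat))%N.
Definition W a n (k : {ffun 'I_a.+1 -> 'I_n.+1}) := (\sum_(l < a.+1) l * (k l : nat))%N.

Lemma JE a n m k : @J a n m k = (S1 k == m) && (W k == m).
Proof. by rewrite /J sum1. Qed.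

Lemma entry_S1 a n (k : {ffun 'I_a.+1 -> 'I_n.+1}) i : (k i <= S1 k)%N.
Proof. rewrite /S1 -sum1; exact: (entry_le (fun l => (k l : nat))). Qed.

Lemma entry2_S1 a n (k : {ffun 'I_a.+1 -> 'I_n.+1}) i j : i != j -> (k i + k j <= S1 k)%N.
Proof. rewrite /S1 -sum1; exact: (entry2_le (fun l => (k l : nat))). Qed.

Definition o1 a : 'I_a.+1 := inord 1.
Definition shift a n (j : 'I_a.+1) (k : {ffun 'I_a.+1 -> 'I_n.+1}) :=
  incr ord0 (incr (inord j.+1) (decr j k)).

Lemma o1E a : (0 < a)%N -> (o1 a : nat) = 1%N.
Proof. by move=> h; rewrite inordK. Qed.

Lemma S1_incr a n (k : {ffun 'I_a.+1 -> 'I_n.+1}) i : (k i < n)%N -> S1 (incr i k) = (S1 k + 1)%N.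
Proof. move=> h; exact: (sum_incr (fun _ => 1%N) h). Qed.
Lemma W_incr a n (k : {ffun 'I_a.+1 -> 'I_n.+1}) i : (k i < n)%N -> W (incr i k) = (W k + i)%N.
Proof. move=> h; exact: (sum_incr (fun l : 'I_a.+1 => (l : nat)) h). Qed.
Lemma S1_decr a n (k : {ffun 'I_a.+1 -> 'I_n.+1}) i : (0 < k i)%N -> (S1 (decr i k) + 1)%N = S1 k.
Proof. move=> h; exact: (sum_decr (fun _ => 1%N) h). Qed.
Lemma W_decr a n (k : {ffun 'I_a.+1 -> 'I_n.+1}) i : (0 < k i)%N -> (W (decr i k) + i)%N = W k.
Proof. move=> h; exact: (sum_decr (fun l : 'I_a.+1 => (l : nat)) h). Qed.

Lemma incr1_J a n m (k : {ffun 'I_a.+1 -> 'I_n.+1}) : (0 < a)%N -> (m < n)%N -> J m k ->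
  ((k (o1 a) < n)%N /\ J m.+1 (incr (o1 a) k)).
Proof.
move=> a0 mn; rewrite !JE => /andP[/eqP s /eqP w].
have h : (k (o1 a) < n)%N by have := entry_S1 k (o1 a); lia.
split=> //; rewrite S1_incr // W_incr // o1E // s w; apply/andP; split; apply/eqP; lia.
Qed.

Lemma shift_J a n m (k : {ffun 'I_a.+1 -> 'I_n.+1}) (j : 'I_a.+1) :
  (m < n)%N -> (j < a)%N -> (0 < k j)%N -> J m k ->
  [/\ (decr j k (inord j.+1) < n)%N,
      (incr (inord j.+1) (decr j k) ord0 < n)%N & J m.+1 (shift j k)].
Proof.
move=> mn ja kj; rewrite !JE => /andP[/eqP s /eqP w].
set j1 : 'I_a.+1 := inord j.+1.
have j1E : (j1 : nat) = j.+1 by rewrite inordK.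
have s1 := S1_decr kj. have w1 := W_decr kj.
have h1 : (decr j k j1 < n)%N.
  have := entry_S1 (decr j k) j1; lia.
have s2 := S1_incr h1. have w2 := W_incr h1.
have h2 : (incr j1 (decr j k) ord0 < n)%N.
  have := entry_S1 (incr j1 (decr j k)) ord0; lia.
have s3 := S1_incr h2. have w3 := W_incr h2.
split=> //; rewrite /shift -/j1 s3 w3 s2 w2 /=; apply/andP; split; apply/eqP; lia.
Qed.

Lemma eq_ordE a (l j : 'I_a.+1) : (l == j) = ((l : nat) == j).
Proof. by []. Qed.

Lemma cover a n m (k : {ffun 'I_a.+1 -> 'I_n.+1}) : (0 < a)%N -> (m < n)%N -> J m.+1 k ->
  (exists k', J m k' /\ k = incr (o1 a) k') \/
  (exists (j : 'I_a.+1) k', [/\ (j < a)%N, J m k', (0 < k' j)%N & k = shift j k']).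
Proof.
move=> a0 mn Jk; have := Jk; rewrite JE => /andP[/eqP s /eqP w].
have o1v := o1E a0.
case: (posnP (k (o1 a))) => k1; last first.
  left; exists (decr (o1 a) k); split.
    rewrite JE; have := S1_decr k1; have := W_decr k1; rewrite o1v.
    move=> h1 h2; apply/andP; split; apply/eqP; lia.
  have h : (decr (o1 a) k (o1 a) < n)%N.
    rewrite decrE eqxx; have := ltn_ord (k (o1 a)); lia.
  apply/ffunP => l; apply: val_inj; rewrite /= incrE // decrE eq_ordE o1v.
  case: eqP => [e|]; last by rewrite subn0 addn0.
  have -> : l = o1 a by apply: val_inj; rewrite /= e o1v.
  lia.
right.
have [j /andP[j1 kj]] : exists j : 'I_a.+1, (1 < j)%N && (0 < k j)%N.
  case: (boolP [exists j : 'I_a.+1, (1 < j)%N && (0 < k j)%N]) => [/existsP //|/existsPn hn].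
  have : W k = 0%N.
    rewrite /W big1 // => l _.
    case: (posnP (k l)) => [->|kl]; first by rewrite muln0.
    have := hn l.
    rewrite kl andbT -leqNgt => l1.
    case: (posnP l) => [->|l0]; first by rewrite mul0n.
    have : l = o1 a by apply: val_inj; rewrite /= o1v; lia.
    by move=> e; rewrite e k1 in kl.
  lia.
have k0 : (0 < k ord0)%N.
  case: (posnP (k ord0)) => // k0.
  have : (S1 k < W k)%N.
    rewrite /S1 /W (bigD1 j) //= [X in (_ < X)%N](bigD1 j) //=.
    rewrite -addSn leq_add //; first by rewrite ltn_mul2r kj.
    apply: leq_sum => l _; case: (posnP l) => [e|l0].
      have -> : l = ord0 by apply: val_inj.
      by rewrite k0.
    by rewrite leq_mul2r l0 orbT.
  lia.
set i : 'I_a.+1 := inord j.-1.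
have iE : (i : nat) = j.-1 by rewrite inordK //; have := ltn_ord j; lia.
have jord : (inord i.+1 : 'I_a.+1) = j by apply: val_inj => /=; rewrite inordK iE; have := ltn_ord j; lia.
set kk1 := decr j k.
have kk10 : (0 < kk1 ord0)%N by rewrite decrE eq_ordE /=; lia.
set k2 := decr ord0 kk1.
have h2 : (k2 i < n)%N.
  have := entry_S1 k2 i; have := S1_decr kk10; have := S1_decr kj; rewrite -/kk1 -/k2; lia.
set k' := incr i k2.
have k'i : (0 < k' i)%N by rewrite incrE // eqxx; lia.
have Jk' : J m k'.
  rewrite JE S1_incr // W_incr //; have := S1_decr kk10; have := S1_decr kj;
  have := W_decr kk10; have := W_decr kj; rewrite -/kk1 -/k2 iE /=; move=> *.
  apply/andP; split; apply/eqP; lia.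
have ia : (i < a)%N by rewrite iE; have := ltn_ord j; lia.
exists i, k'; split=> //.
have [p1 p2 _] := shift_J mn ia k'i Jk'.
rewrite jord in p1 p2 *.
apply/ffunP => l; apply: val_inj; rewrite /shift jord /= incrE // incrE // decrE.
rewrite /k' incrE // /k2 decrE /kk1 decrE.
case: (eqVneq l j) => [->|lj]; first by rewrite !eq_ordE iE /=; lia.
case: (eqVneq l ord0) => [->|l0]; first by move: lj; rewrite !eq_ordE iE /=; lia.
move: lj l0; rewrite !eq_ordE iE /=; lia.
Qed.
Local Open Scope ring_scope.
Definition cst (R : comAlgType rat) (x : rat) : {poly R} := (x%:A)%:P.

Lemma cstD R x y : cst R (x + y) = cst R x + cst R y.
Proof. by rewrite /cst scalerDl polyCD. Qed.
Lemma cst0 R : cst R 0 = 0.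
Proof. by rewrite /cst scale0r. Qed.
Lemma cstM R x y : cst R (x * y) = cst R x * cst R y.
Proof. by rewrite /cst -polyCM -scalerA -scalerAl mul1r. Qed.
Lemma cstn R (k : nat) : cst R k%:R = k%:R.
Proof. by rewrite /cst scaler_nat polyCMn polyC1. Qed.
Lemma cst_sum R (I : Type) (r : seq I) (P : pred I) (F : I -> rat) :
  cst R (\sum_(i <- r | P i) F i) = \sum_(i <- r | P i) cst R (F i).
Proof. exact: (big_morph _ (@cstD R) (@cst0 R)). Qed.

Lemma shift_Mon (R : comAlgType rat) a n m (U : {poly R}) (k : {ffun 'I_a.+1 -> 'I_n.+1}) (j : 'I_a.+1) :
  (m < n)%N -> (j < a)%N -> (0 < k j)%N -> J m k ->
  U * (U^`(j.+1) * Mon U (decr j k)) = Mon U (shift j k).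
Proof.
move=> mn ja kj Jk; have [p1 p2 _] := shift_J mn ja kj Jk.
rewrite /shift Mon_incr // Mon_incr // (_ : U^`(ord0) = U) ?derivn0 // inordK //; lia.
Qed.

Lemma incr1_Mon (R : comAlgType rat) a n m (U : {poly R}) (k : {ffun 'I_a.+1 -> 'I_n.+1}) :
  (0 < a)%N -> (m < n)%N -> J m k -> Mon U (incr (o1 a) k) = U^`() * Mon U k.
Proof.
move=> a0 mn Jk; have [p1 _] := incr1_J a0 mn Jk.
by rewrite Mon_incr // o1E // derivn1.
Qed.

Lemma ind_sum (R : comAlgType rat) a n m (U : {poly R}) (x : {ffun 'I_a.+1 -> 'I_n.+1}) (c : rat) :
  (c != 0 -> J m x) ->
  cst R c * \sum_(k | J m k) cst R (k == x)%:R * Mon U k = cst R c * Mon U x.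
Proof.
case: (eqVneq c 0) => [->|c0 /(_ isT) Jx]; first by rewrite cst0 !mul0r.
congr (_ * _); rewrite (bigD1 x) //= eqxx cstn mul1r big1 ?addr0 // => k /andP[_ kx].
by rewrite (negbTE kx) cstn mul0r.
Qed.

Lemma term_j (R : comAlgType rat) a n m (U : {poly R}) (k : {ffun 'I_a.+1 -> 'I_n.+1}) (j : 'I_a.+1) :
  (size U <= a.+1)%N -> (m < n)%N -> J m k ->
  U * (U^`(j.+1) * Mon U (decr j k) *+ k j) =
  cst R ((k j * (j < a))%N%:R) * Mon U (shift j k).
Proof.
move=> sU mn Jk; case: (posnP (k j)) => [->|kj].
  by rewrite mulr0n mulr0 mul0n cstn mul0r.
case: (ltnP j a) => ja.
  by rewrite muln1 cstn mulr_natl mulrnAr (shift_Mon _ mn ja kj Jk).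
rewrite muln0 cstn mul0r derivn_poly0 ?mul0r ?mul0rn ?mulr0 //.
by have := ltn_ord j; lia.
Qed.

Lemma step (R : comAlgType rat) a n (U : {poly R}) lam m (q : {ffun 'I_a.+1 -> 'I_n.+1} -> rat) :
  (0 < a)%N -> (size U <= a.+1)%N -> (m < n)%N -> (m <= lam)%N ->
  (forall k, J m k -> 0 < q k) ->
  wpoly U lam m = \sum_(k | J m k) cst R (q k) * Mon U k ->
  exists Q : {ffun 'I_a.+1 -> 'I_n.+1} -> rat, (forall k, J m.+1 k -> 0 < Q k) /\
    wpoly U lam m.+1 = \sum_(k | J m.+1 k) cst R (Q k) * Mon U k.
Proof.
move=> a0 sU mn ml qpos hw.
set c : rat := ((lam - m).+1)%:R.
have c0 : 0 < c by rewrite ltr0Sn.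
have hc : ((lam%:Z - m.+1%:Z + 2)%:~R : R) = c%:A.
  have -> : (lam%:Z - m.+1%:Z + 2) = ((lam - m).+1)%:Z by lia.
  by rewrite /c scaler_nat.
pose coef (k' : {ffun 'I_a.+1 -> 'I_n.+1}) (j : 'I_a.+1) : rat := ((k' j * (j < a))%N%:R).
pose t (k' k : {ffun 'I_a.+1 -> 'I_n.+1}) : rat := c * (k == incr (o1 a) k')%:R +
   \sum_(j < a.+1) coef k' j * (k == shift j k')%:R.
have tge : forall k' k, 0 <= t k' k.
  move=> k' k; apply: addr_ge0; first by apply: mulr_ge0; [exact: ltW|exact: ler0n].
  by apply: sumr_ge0 => j _; apply: mulr_ge0; exact: ler0n.
exists (fun k => \sum_(k' | J m k') q k' * t k' k); split.
  move=> k Jk.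
  have [k' [Jk' tp]] : exists k', J m k' /\ 0 < t k' k.
    case: (cover a0 mn Jk) => [[k' [Jk' ->]]|[j [k' [ja Jk' kj ->]]]]; exists k'; split=> //.
      rewrite /t eqxx mulr1; apply: ltr_pwDl c0 _.
      by apply: sumr_ge0 => i _; apply: mulr_ge0; exact: ler0n.
    rewrite /t (bigD1 j) //= eqxx mulr1; apply: ltr_wpDl.
      by apply: mulr_ge0; [exact: ltW|exact: ler0n].
    apply: ltr_pwDl; first by rewrite /coef ja muln1 ltr0n.
    by apply: sumr_ge0 => i _; apply: mulr_ge0; exact: ler0n.
  rewrite (bigD1 k') //=; apply: ltr_pwDl; first by apply: mulr_gt0 => //; exact: qpos.
  apply: sumr_ge0 => i /andP[Ji _]; apply: mulr_ge0 => //; exact: ltW (qpos _ Ji).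
change (wpoly U lam m.+1) with (((lam%:Z - m.+1%:Z + 2)%:~R : R)%:P * U^`() * wpoly U lam m
   + U * (wpoly U lam m)^`()).
rewrite hc hw.
under [RHS]eq_bigr => k _ do rewrite cst_sum mulr_suml.
rewrite exchange_big /= raddf_sum !mulr_sumr -big_split /=; apply: eq_bigr => k' Jk'.
under eq_bigr => k _ do rewrite cstM -mulrA.
rewrite -mulr_sumr.
under eq_bigr => k _ do rewrite /t cstD mulrDl cst_sum mulr_suml cstM -mulrA.
rewrite big_split /= exchange_big /=.
under [X in _ * (_ + X)]eq_bigr => j _ do
  (under eq_bigr => k _ do rewrite cstM -mulrA; rewrite -mulr_sumr).
rewrite -mulr_sumr.
have [_ Jx] := incr1_J a0 mn Jk'.
rewrite (@ind_sum R a n m.+1 U _ c (fun _ => Jx)).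
rewrite [X in _ * (_ + X)](eq_bigr (fun j => cst R (coef k' j) * Mon U (shift j k'))); last first.
  move=> j _; apply: ind_sum => cj; have : (0 < k' j)%N /\ (j < a)%N.
    move: cj; rewrite /coef pnatr_eq0 muln_eq0 negb_or => /andP[h1 h2]; split; first by rewrite lt0n.
    by move: h2; case: (j < a)%N.
  by case=> kj ja; have [_ _ ->] := shift_J mn ja kj Jk'.
rewrite derivM derivC mul0r add0r Mon_deriv [U * (cst R _ * _)]mulrCA [U * _]mulr_sumr.
under [X in _ + cst R (q k') * X = _]eq_bigr => j _ do rewrite (@term_j R a n m U k' j sU mn Jk').
rewrite (incr1_Mon _ a0 mn Jk').
rewrite /cst; ring.
Qed.
Lemma size_Upoly (R : comAlgType rat) a (u : 'I_a.+1 -> R) : (size (Upoly u) <= a.+1)%N.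
Proof.
apply: leq_trans (size_sum _ _ _) _; apply/bigmax_leqP => j _.
by apply: leq_trans (size_scale_leq _ _) _; rewrite size_polyXn ltn_ord.
Qed.

Lemma base (R : comAlgType rat) a n (U : {poly R}) lam :
  exists q : {ffun 'I_a.+1 -> 'I_n.+1} -> rat, (forall k, J 0 k -> 0 < q k) /\
    wpoly U lam 0 = \sum_(k | J 0 k) cst R (q k) * Mon U k.
Proof.
exists (fun _ => (lam.+1%:R : rat)^-1); split.
  by move=> k _; rewrite invr_gt0 ltr0Sn.
set k0 : {ffun 'I_a.+1 -> 'I_n.+1} := [ffun => ord0].
have Jk0 : J 0 k0.
  by rewrite /J; apply/andP; split; apply/eqP; apply: big1 => j _; rewrite ffunE ?muln0.
rewrite (bigD1 k0) //= big1 ?addr0.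
  by rewrite /Mon big1 ?mulr1 // => j _; rewrite ffunE expr0.
move=> k /andP[Jk kk0]; exfalso; move/negP: kk0; apply.
apply/eqP/ffunP => l; apply: val_inj; rewrite ffunE /=.
move: Jk; rewrite JE => /andP[/eqP s _]; have := entry_S1 k l; lia.
Qed.

Lemma allm (R : comAlgType rat) a n (U : {poly R}) lam m :
  (0 < a)%N -> (size U <= a.+1)%N -> (m <= n)%N -> (m <= lam.+1)%N ->
  exists q : {ffun 'I_a.+1 -> 'I_n.+1} -> rat, (forall k, J m k -> 0 < q k) /\
    wpoly U lam m = \sum_(k | J m k) cst R (q k) * Mon U k.
Proof.
move=> a0 sU; elim: m => [|m IH] mn ml; first exact: base.
have [q [qp hq]] := IH (ltnW mn) (ltnW ml).
exact: (step a0 sU mn ml qp hq).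
Qed.

Theorem mainTheorem6 (R : comAlgType rat) (a : nat) (u : 'I_a.+1 -> R)
    (lam n : nat) :
  (2 <= a)%N -> (1 <= n)%N -> (n <= lam.+1)%N ->
  exists q : {ffun 'I_a.+1 -> 'I_n.+1} -> rat,
    (forall k, inI k -> 0 < q k) /\
    wpoly (Upoly u) lam n =
      \sum_(k : {ffun 'I_a.+1 -> 'I_n.+1} | inI k)
         (q k)%:A%:P * \prod_(j < a.+1) ((Upoly u)^`(j)) ^+ (k j).
Proof.
move=> a2 n1 nl.
have a0 : (0 < a)%N by lia.
have [q [qp hq]] := @allm R a n (Upoly u) lam n a0 (size_Upoly u) (leqnn n) nl.
by exists q; split; [exact: qp | exact: hq].
Qed.
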